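(* Let $\|\cdot\|$ be a norm on $\mathbb R^n$. Suppose $\Psi=\delta_C$ for a closed convex set $C\subseteq\mathbb R^n$, $x^\star\in C$ is a minimizer of $f$ over $C$, $\nu\in(0,1]$ and $p\ge2$. Suppose $\nabla f$ is $\nu$-Hölder continuous on $C$, i.e. there is $L>0$ with $\|\nabla f(x)-\nabla f(y)\|^*\le L\|x-y\|^\nu$ for all $x,y\in C$, and there is $\sigma>0$ such that $\langle\nabla f(x^\star),x-x^\star\rangle\ge\sigma\|x-x^\star\|^p$ for all $x\in C$. Then $(\mathcal D,\mathrm{gap})$ satisfies the $(q,r)$ local growth property with $q=1+\nu$ and $r=\frac{q(q-1)}{p(p-1)}$.
   Context: Let $f:\mathbb{R}^n\to\mathbb{R}\cup\{\infty\}$ be a closed proper convex function differentiable on $C$, and $\Psi=\delta_C$ the indicator function of $C$ (so $\arg\min_y\{\langle g,y\rangle+\Psi(y)\}=\arg\min_{y\in C}\langle g,y\rangle=\partial\Psi^*(-g)$). $f^*,\Psi^*$ denote conjugates; $\|\cdot\|^*$ is the dual norm. $D_f(y,x)=f(y)-f(x)-\langle\nabla f(x),y-x\rangle$. $\mathrm{gap}(x,u)=f(x)+\Psi(x)+f^*(u)+\Psi^*(-u)$. $\mathcal{D}(x,s,\theta)=D_f(x+\theta(s-x),x)+\Psi(x+\theta(s-x))-(1-\theta)\Psi(x)-\theta\Psi(s)$. $(q,r)$ local growth property ($q>1$, $r\in[0,1]$): there exist constants $\epsilon>0$ and $M>0$ such that for all $x\in\mathrm{dom}(\Psi)$, $g=\nabla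 f(x)$ and $s\in\partial\Psi^*(-g)$ with $\mathrm{gap}(x,g)<\epsilon$, one has $\mathcal D(x,s,\theta)\le\frac{M\theta^q}{q}\mathrm{gap}(x,g)^r$ for all $\theta\in[0,1]$. *)

(* Defs.v *)
From HB Require Import structures.
From mathcomp Require Import all_boot all_order all_algebra.
From mathcomp Require Import all_classical all_reals all_analysis.
Set Implicit Arguments. Unset Strict Implicit. Unset Printing Implicit Defensive.
Import Order.TTheory GRing.Theory Num.Theory.
Import numFieldNormedType.Exports.
Local Open Scope classical_set_scope.
Local Open Scope ring_scope.

Section Defs.
Variables (R : realType) (n : nat).
Notation V := 'rV[R]_n.

Definition inner (u v : V) : R := \sum_(i < n) u 0 i * v 0 i.

Definition is_norm (N : V -> R) : Prop :=
  [/\ forall x, 0 <= N x,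
      forall x, N x = 0 -> x = 0,
      forall (a : R) x, N (a *: x) = `|a| * N x
    & forall x y, N (x + y) <= N x + N y].

Definition dual_norm (N : V -> R) (g : V) : R :=
  sup [set inner g x | x in [set x | N x <= 1]].

Definition proper_fun (f : V -> \bar R) : Prop :=
  (exists x, f x < +oo)%E /\ (forall x, -oo < f x)%E.

Definition convex_fun (f : V -> \bar R) : Prop :=
  forall (x y : V) (t : R), 0 <= t <= 1 ->
    (f (t *: x + (1 - t) *: y)%R <= t%:E * f x + (1 - t)%:E * f y)%E.

(* closed = lower semicontinuous = all sublevel sets closed *)
Definition closed_fun (f : V -> \bar R) : Prop :=
  forall a : R, closed [set x | (f x <= a%:E)%E].

Definition differentiable_on (f : V -> \bar R) (C : set V) : Prop :=
  forall x, C x ->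
    (\forall y \near x, f y \is a fin_num) /\ differentiable (fine \o f) x.

Definition grad (f : V -> \bar R) (x : V) : V :=
  \row_(i < n) ('d (fine \o f) x (delta_mx 0 i : V)).

Definition delta_ind (C : set V) (y : V) : \bar R :=
  if `[< C y >] then 0%E else (+oo)%E.

Definition conj (h : V -> \bar R) (u : V) : \bar R :=
  ereal_sup [set ((inner u y)%:E - h y)%E | y in [set: V]].

Definition subdiff (h : V -> \bar R) (v : V) : set V :=
  [set s | h v \is a fin_num /\
           forall w, (h v + (inner s (w - v)%R)%:E <= h w)%E].

Definition bregman (f : V -> \bar R) (y x : V) : \bar R :=
  (f y - f x - (inner (grad f x) (y - x)%R)%:E)%E.

Definition gap (f Psi : V -> \bar R) (x u : V) : \bar R :=
  (f x + Psi x + conj f u + conj Psi (- u)%R)%E.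

Definition Dcal (f Psi : V -> \bar R) (x s : V) (th : R) : \bar R :=
  (bregman f (x + th *: (s - x))%R x + Psi (x + th *: (s - x))%R
   - (1 - th)%:E * Psi x - th%:E * Psi s)%E.

Definition local_growth (f Psi : V -> \bar R) (q r : R) : Prop :=
  1 < q /\ 0 <= r <= 1 /\
  exists eps M : R, 0 < eps /\ 0 < M /\
    forall x g s : V, Psi x \is a fin_num -> g = grad f x ->
      subdiff (conj Psi) (- g) s ->
      (gap f Psi x g < eps%:E)%E ->
      forall th : R, 0 <= th <= 1 ->
        (Dcal f Psi x s th <=
           ((M * th `^ q / q) * (fine (gap f Psi x g)) `^ r)%:E)%E.

End Defs.

(* Main.v *)
Require Import Defs.
From HB Require Import structures.
From mathcomp Require Import all_boot all_order all_algebra.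
From mathcomp Require Import all_classical all_reals all_analysis.
From mathcomp Require Import ring lra.
Set Implicit Arguments. Unset Strict Implicit. Unset Printing Implicit Defensive.
Import Order.TTheory GRing.Theory Num.Theory.
Import numFieldNormedType.Exports.
Local Open Scope classical_set_scope.
Local Open Scope ring_scope.

Section Helpers.
Variables (R : realType) (n : nat).
Notation V := 'rV[R]_n.

Lemma entry_le_norm (x : V) i : `|x 0 i| <= `|x|.
Proof.
have -> : `|x| = mx_norm x by []. rewrite mx_normrE.
by apply/bigmax_geP; right => /=; exists (0, i).
Qed.

Lemma innerC (u v : V) : inner u v = inner v u.
Proof. by apply: eq_bigr => i _; rewrite mulrC. Qed.
Lemma innerDr (u v w : V) : inner u (v + w) = inner u v + inner u w.
Proof. by rewrite /inner -big_split; apply: eq_bigr => i _; rewrite mxE mulrDr. Qed.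
Lemma innerZr (u v : V) a : inner u (a *: v) = a * inner u v.
Proof. by rewrite /inner mulr_sumr; apply: eq_bigr => i _; rewrite mxE mulrCA. Qed.
Lemma innerNr (u v : V) : inner u (- v) = - inner u v.
Proof. by rewrite -scaleN1r innerZr mulN1r. Qed.
Lemma innerBr (u v w : V) : inner u (v - w) = inner u v - inner u w.
Proof. by rewrite innerDr innerNr. Qed.
Lemma innerDl (u v w : V) : inner (v + w) u = inner v u + inner w u.
Proof. by rewrite innerC innerDr !(innerC u). Qed.
Lemma innerNl (u v : V) : inner (- v) u = - inner v u.
Proof. by rewrite innerC innerNr innerC. Qed.
Lemma innerBl (u v w : V) : inner (v - w) u = inner v u - inner w u.
Proof. by rewrite innerDl innerNl. Qed.
Lemma inner0r (u : V) : inner u 0 = 0.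
Proof. by rewrite -(scale0r (0:V)) innerZr mul0r. Qed.

Variable N : V -> R.
Hypothesis HN : is_norm N.

Lemma N0 : N 0 = 0.
Proof. by case: HN => _ _ hZ _; rewrite -(scale0r (0:V)) hZ normr0 mul0r. Qed.

Lemma NN x : N (- x) = N x.
Proof. by case: HN => _ _ hZ _; rewrite -scaleN1r hZ normrN normr1 mul1r. Qed.

Lemma N_sum (I : Type) (r : seq I) (F : I -> V) :
  N (\sum_(i <- r) F i) <= \sum_(i <- r) N (F i).
Proof.
case: HN => h0 _ _ hD.
elim: r => [|a r IH]; first by rewrite !big_nil N0.
rewrite !big_cons; apply: le_trans (hD _ _) _; exact: lerD.
Qed.

Definition KN := \sum_(i < n) N (delta_mx 0 i).

Lemma N_le_K x : N x <= `|x| * KN.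
Proof.
case: HN => h0 _ hZ _.
rewrite {1}(row_sum_delta x); apply: le_trans (N_sum _ _) _.
rewrite /KN mulr_sumr; apply: ler_sum => i _.
by rewrite hZ ler_wpM2r // entry_le_norm.
Qed.

Lemma N_cont : continuous N.
Proof.
case: HN => h0 _ hZ hD.
move=> x; apply/(@cvgrPdist_lt _ _ _ _ (nbhs_filter x)) => e e0.
have hK : 0 <= KN by apply: sumr_ge0 => i _; case: HN.
have hK1 : 0 < KN + 1 by lra.
near=> y.
have t1 : N x <= N (x - y) + N y by have := hD (x - y) y; rewrite subrK.
have t2 : N y <= N (x - y) + N x by have := hD (y - x) x; rewrite subrK -opprB NN.
have H1 : `|N x - N y| <= N (x - y).
  by rewrite ler_norml; apply/andP; split; lra.
apply: le_lt_trans H1 _; apply: le_lt_trans (N_le_K _) _.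
have : `|x - y| < e / (KN + 1).
  near: y. apply: (@cvgr_dist_lt _ _ _ _ (nbhs_filter x) id x cvg_id). by apply: divr_gt0.
rewrite ltr_pdivlMr // => h.
have : `|x - y| * KN <= `|x - y| * (KN + 1) by rewrite ler_wpM2l // lerDl.
lra.
Unshelve. all: by end_near. Qed.


Lemma unit_vec (x : V) : x != 0 -> `| `|x|^-1 *: x | = 1.
Proof.
move=> x0; rewrite normrZ ger0_norm ?invr_ge0 // mulVf //.
by rewrite normr_eq0.
Qed.

Lemma norm_equiv : exists2 c, 0 < c & forall x : V, `|x| <= c * N x.
Proof.
have [h0 hE hZ hD] := HN.
set S := [set x : V | `|x| = 1].
have [[m Sm]|S0] := pselect (S !=set0).
- have cS : compact S.
    apply: bounded_closed_compact.
      exists 1; split => // M M1 x /= ->; exact: ltW.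
    have -> : S = (fun x : V => `|x|) @^-1` [set x : R | x = 1] by [].
    apply: preimage_closed; last exact: closed_eq.
    by move=> x _; exact: norm_continuous.
  have [c Sc cmin] := compact_EVT_min (ex_intro _ m Sm) cS (continuous_subspaceT N_cont).
  move: Sc; rewrite inE /S /= => Sc.
  have Nc0 : 0 < N c.
    rewrite lt_neqAle h0 andbT; apply/eqP => /esym /hE c0.
    by move: Sc; rewrite c0 normr0 => /eqP; rewrite eq_sym oner_eq0.
  exists (N c)^-1; first by rewrite invr_gt0.
  move=> x; have [->|x0] := eqVneq x 0; first by rewrite normr0 N0 mulr0.
  have := cmin (`|x|^-1 *: x); rewrite inE /S /= unit_vec // => /(_ erefl).
  rewrite hZ ger0_norm ?invr_ge0 // => H.
  have nx0 : 0 < `|x| by rewrite normr_gt0.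
  have H2 : `|x| * N c <= N x.
    by have := ler_wpM2l (ltW nx0) H; rewrite mulrA mulfV ?mul1r // gt_eqF.
  by rewrite -(ler_pM2l Nc0) mulrA mulfV ?gt_eqF // mul1r mulrC.
- exists 1 => // x; have [->|x0] := eqVneq x 0; first by rewrite normr0 N0 mulr0.
  exfalso; apply: S0; exists (`|x|^-1 *: x); exact: unit_vec.
Qed.


Lemma dual_le u v : inner u v <= dual_norm N u * N v.
Proof.
have [c c0 hc] := norm_equiv.
have [h0 hE hZ hD] := HN.
set S := [set inner u x | x in [set x | N x <= 1]].
have ub : ubound S (\sum_i `|u 0 i| * c).
  move=> _ [x /= Nx <-]; rewrite /inner; apply: ler_sum => i _.
  apply: le_trans (ler_norm _) _; rewrite normrM ler_wpM2l //.
  apply: le_trans (entry_le_norm x i) _; apply: le_trans (hc x) _.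
  by rewrite ler_piMr // ltW.
have hs : has_sup S.
  split; last by exists (\sum_i `|u 0 i| * c).
  by exists (inner u 0), 0 => //=; rewrite N0.
have [/hE ->|Nv0] := eqVneq (N v) 0; first by rewrite inner0r N0 mulr0.
have Nvp : 0 < N v by rewrite lt_neqAle eq_sym Nv0 h0.
have : inner u ((N v)^-1 *: v) <= dual_norm N u.
  apply: sup_upper_bound => //; exists ((N v)^-1 *: v) => //=.
  by rewrite hZ ger0_norm ?invr_ge0 ?h0 // mulVf.
rewrite innerZr -(ler_pM2l Nvp) mulrA mulfV // mul1r mulrC; exact.
Qed.


Lemma d_inner (f : V -> \bar R) x v :
  'd (fine \o f) x v = inner (grad f x) v.
Proof.
rewrite {1}(row_sum_delta v) linear_sum /inner; apply: eq_bigr => i _.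
by rewrite linearZ mxE /= mulrC.
Qed.

Lemma grad_ineq (f : V -> \bar R) (C : set V) x y :
  convex_fun f -> proper_fun f -> differentiable_on f C -> C x ->
  (f x + (inner (grad f x) (y - x))%:E <= f y)%E.
Proof.
move=> cf [_ pf] df Cx.
have [nearfin dh] := df x Cx.
have fxfin : f x \is a fin_num := nbhs_singleton nearfin.
case Efy: (f y) => [fy| |]; last by have := pf y; rewrite Efy.
  2: by rewrite leey.
rewrite -(fineK fxfin) -EFinD lee_fin -d_inner.
set h := fine \o f.
suff : 'd h x (y - x) <= fy - fine (f x) by lra.
rewrite -deriveE //.
have dv := diff_derivable (v := y - x) dh.
rewrite /derive (cvg_at_rightE _ _ dv).
have hc : (fun t : R => t *: (y - x) + x) @ 0^'+ --> x.
  apply: cvg_at_right_filter.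
  suff : (fun t : R => t *: (y - x) + x) @ 0 --> 0 *: (y - x) + x.
    by rewrite scale0r add0r.
  apply: cvgD; last exact: cvg_cst.
  by apply: cvgZl; exact: cvg_id.
have Hfin : \forall t \near 0^'+, f (t *: (y - x) + x) \is a fin_num.
  exact: hc _ nearfin.
apply: limr_le.
  by apply/cvg_ex; exists (lim (t^-1 *: ((h \o shift x) (t *: (y - x)) - h x) @[t --> 0^'])); apply: cvg_dnbhs_at_right.
near=> t.
have t0 : 0 < t by near: t; exact: nbhs_right_gt.
have t1 : t <= 1 by near: t; apply: nbhs_right_le; exact: ltr01.
have tfin : f (t *: (y - x) + x) \is a fin_num by near: t; exact: Hfin.
have E : t *: (y - x) + x = t *: y + (1 - t) *: x.
  by rewrite scalerBr scalerBl scale1r [x - _]addrC addrA.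
have := cf y x t; rewrite -E Efy -(fineK fxfin) -(fineK tfin) -!EFinM -EFinD lee_fin.
move=> /(_ _)/wrap[]. by rewrite (ltW t0) t1.
rewrite /= -/h => H.
have -> : t^-1 *: (fine (f (t *: (y - x) + x)) - fine (f x)) = (fine (f (t *: (y - x) + x)) - fine (f x)) / t.
  by rewrite mulrC.
rewrite ler_pdivrMr //; nra.
Unshelve. all: by end_near.
Qed.

End Helpers.


Section Key.
Variable R : realType.

Lemma powR_anti (G x y : R) : 0 <= G <= 1 -> 0 < y <= x -> G `^ x <= G `^ y.
Proof.
move=> /andP[G0 G1] /andP[y0 yx].
have [->|Gn0] := eqVneq G 0.
  by rewrite !powR0 // gt_eqF // (lt_le_trans y0 yx).
by apply: ger_powR => //; rewrite G1 andbT lt_neqAle eq_sym Gn0.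
Qed.

Lemma mono_pow (x y r : R) : 0 <= r -> 0 <= x -> x <= y -> x `^ r <= y `^ r.
Proof.
move=> r0 x0 xy; apply: ge0_ler_powR => //; rewrite ?nnegrE //.
exact: le_trans xy.
Qed.

Lemma root_pow (a p : R) : 0 <= a -> 0 < p -> (a `^ p) `^ p^-1 = a.
Proof. by move=> a0 p0; rewrite -powRrM mulfV ?gt_eqF // powRr1. Qed.

Lemma key (a b G s L nu p : R) :
  0 < s -> 0 < L -> 0 < nu -> nu <= 1 -> 2 <= p ->
  0 <= a -> 0 <= b -> 0 <= G -> G <= 1 ->
  s * a `^ p <= G -> s * b `^ p <= L * a `^ nu * b ->
  a + b <= ((s^-1) `^ (p^-1) + (L / s) `^ ((p - 1)^-1) * ((s^-1) `^ (p^-1)) `^ (nu / (p - 1)))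
           * G `^ (p^-1 * (nu / (p - 1))).
Proof.
move=> s0 L0 nu0 nu1 p2 a0 b0 G0 G1 Ha Hb.
have p0 : 0 < p by lra.
have p10 : 0 < p - 1 by lra.
set c1 := (s^-1) `^ (p^-1).
set e := p^-1 * (nu / (p - 1)).
have e0 : 0 < e by rewrite mulr_gt0 ?invr_gt0 ?divr_gt0.
have ep : e <= p^-1.
  rewrite /e; apply: ler_piMr; first by rewrite invr_ge0 ltW.
  rewrite ler_pdivrMr //; lra.
have c10 : 0 <= c1 by apply: powR_ge0.
have Ha1 : a <= c1 * G `^ (p^-1).
  have si : 0 <= s^-1 by rewrite invr_ge0 ltW.
  rewrite -(root_pow a0 p0) /c1 -powRM //.
  apply: mono_pow; [by rewrite invr_ge0 ltW | exact: powR_ge0 |].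
  by rewrite mulrC ler_pdivlMr // mulrC.
have Ha2 : a <= c1 * G `^ e.
  apply: le_trans Ha1 _; apply: ler_wpM2l => //; apply: powR_anti.
    by rewrite G0 G1.
  by rewrite e0 ep.
have Hb1 : b <= (L / s) `^ ((p - 1)^-1) * c1 `^ (nu / (p - 1)) * G `^ e.
  have [->|bn0] := eqVneq b 0.
    by rewrite mulr_ge0 ?mulr_ge0 ?powR_ge0.
  have bp : 0 < b by rewrite lt_neqAle eq_sym bn0 b0.
  have Hb2 : b `^ (p - 1) <= (L / s) * a `^ nu.
    have : s * b `^ (p - 1) * b <= L * a `^ nu * b.
      apply: le_trans Hb; rewrite -mulrA -{2}(powRr1 b0) -powRD; last by rewrite bn0 implybT.
      by rewrite subrK.
    rewrite ler_pM2r // => H.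
    by rewrite mulrAC ler_pdivlMr // mulrC.
  have Hb3 : b <= (L / s) `^ ((p - 1)^-1) * (a `^ nu) `^ ((p - 1)^-1).
    have Ls : 0 <= L / s by rewrite divr_ge0 // ltW.
    have p1i : 0 <= (p-1)^-1 by rewrite invr_ge0 ltW.
    rewrite -powRM; [|exact: Ls|exact: powR_ge0].
    rewrite -(root_pow b0 p10).
    by apply: mono_pow => //; exact: powR_ge0.
  apply: le_trans Hb3 _; rewrite -mulrA ler_wpM2l ?powR_ge0 //.
  rewrite -powRrM.
  have nup : 0 <= nu / (p - 1) by rewrite divr_ge0 // ltW.
  apply: le_trans (mono_pow nup a0 Ha1) _.
  rewrite powRM //; last exact: powR_ge0.
  by rewrite -powRrM.
rewrite mulrDl; apply: lerD => //.
Qed.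

Lemma lin3 (a b c fs fx G : R) :
  a <= b -> fs + b <= fx -> fx + - c <= fs -> c <= G -> a <= G.
Proof. lra. Qed.

Lemma lin2 (a b c : R) : a <= 0 -> b <= c -> a + b <= c.
Proof. lra. Qed.

Lemma lin4 (fth fx t u : R) : fth + - t <= fx -> fth - fx - u <= t - u.
Proof. lra. Qed.

Lemma pow1D (z nu : R) : 0 <= z -> 0 < nu -> z `^ nu * z = z `^ (1 + nu).
Proof.
move=> z0 nu0; rewrite powRD ?powRr1 1?mulrC //.
by rewrite gt_eqF ?implyFb // addr_gt0.
Qed.

Lemma addrsub (a b : R) : b = a + (b - a).
Proof. by rewrite addrCA subrr addr0. Qed.

End Key.

Lemma cvx (R : realType) n (C : set 'rV[R]_n) (x s : 'rV[R]_n) (th : R) :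
  convex_set C -> C x -> C s -> 0 <= th <= 1 -> C (x + th *: (s - x)).
Proof.
move=> cC Cx Cs /andP[t0 t1].
have := cC s x (Itv01 t0 t1); rewrite !inE => /(_ Cs Cx).
congr C. change (th *: s + (1 - th) *: x = x + th *: (s - x)).
by rewrite scalerBl scale1r scalerBr addrCA.
Qed.

Theorem proposition6 (R : realType) (n : nat) (N : 'rV[R]_n -> R)
  (f : 'rV[R]_n -> \bar R) (C : set 'rV[R]_n) (xstar : 'rV[R]_n)
  (nu p L sigma : R) :
  is_norm N ->
  closed C -> convex_set C ->
  closed_fun f -> proper_fun f -> convex_fun f -> differentiable_on f C ->
  C xstar -> (forall x, C x -> (f xstar <= f x)%E) ->
  0 < nu <= 1 -> 2 <= p ->
  0 < L ->
  (forall x y, C x -> C y ->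
     dual_norm N (grad f x - grad f y) <= L * N (x - y) `^ nu) ->
  0 < sigma ->
  (forall x, C x -> sigma * N (x - xstar) `^ p <= inner (grad f xstar) (x - xstar)) ->
  local_growth f (delta_ind C) (1 + nu)
    ((1 + nu) * ((1 + nu) - 1) / (p * (p - 1))).
Proof.
move=> HN Ccl Ccvx fcl fprop fcvx fdiff Cxs xsmin /andP[nu0 nu1] p2 L0 Hhol s0 Hgrow.
have p0 : 0 < p by lra.
have p10 : 0 < p - 1 by lra.
set Psi := delta_ind C.
have PsiC : forall y, C y -> Psi y = 0%E.
  by move=> y Cy; rewrite /Psi /delta_ind asboolT.
have PsiNC : forall y, ~ C y -> Psi y = (+oo)%E.
  by move=> y Cy; rewrite /Psi /delta_ind asboolF.
have ffin : forall y, C y -> f y \is a fin_num.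
  by move=> y Cy; have [h _] := fdiff y Cy; exact: nbhs_singleton h.
have nuE : 1 + nu - 1 = nu by rewrite addrAC subrr add0r.
split; first lra.
split.
  rewrite nuE; apply/andP; split.
    by rewrite divr_ge0 // mulr_ge0 // ltW // ?ltW //; lra.
  rewrite ler_pdivrMr ?mulr_gt0 // mul1r; nra.
set e := p^-1 * (nu / (p - 1)).
have rE : (1 + nu) * (1 + nu - 1) / (p * (p - 1)) = e * (1 + nu).
  rewrite nuE /e; field.
  by apply/andP; split; rewrite gt_eqF.
rewrite rE.
set K := (sigma^-1) `^ (p^-1) + (L / sigma) `^ ((p - 1)^-1) * ((sigma^-1) `^ (p^-1)) `^ (nu / (p - 1)).
have K0 : 0 < K.
  have c10 : 0 < (sigma^-1) `^ (p^-1) by apply: powR_gt0; rewrite invr_gt0.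
  apply: (lt_le_trans c10); rewrite /K lerDl; apply: mulr_ge0; exact: powR_ge0.
exists 1, (L * K `^ (1 + nu) * (1 + nu)).
split; first exact: ltr01.
split; first by rewrite !mulr_gt0 ?powR_gt0 //; lra.
move=> x _ s Psix -> sub gapl th /andP[th0 th1].
set gx := grad f x.
have Cx : C x.
  case: (pselect (C x)) => // nC; move: Psix; rewrite /Psi /delta_ind asboolF //.
set gs := grad f xstar.
have fxE := fineK (ffin x Cx).
set fx := fine (f x).
have h2 : ((- inner gx xstar)%:E <= conj Psi (- gx))%E.
  apply: ereal_sup_ubound; exists xstar => //=.
  by rewrite PsiC // sube0 innerNl.
have gapge : ((inner gx (x - xstar))%:E <= gap f Psi x gx)%E.
  rewrite /gap PsiC // adde0.
  have h1 : ((inner gx x - fx)%:E <= conj f gx)%E.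
    apply: ereal_sup_ubound; exists x => //=.
    by rewrite -fxE EFinB.
  apply: le_trans (leeD (leeD (lexx _) h1) h2).
  rewrite -fxE -!EFinD lee_fin innerBr -/fx; lra.
have gapfin : gap f Psi x gx \is a fin_num.
  rewrite fin_numE; apply/andP; split.
    by apply/eqP => E; move: gapge; rewrite E leeNy_eq.
  by apply/eqP => E; move: gapl; rewrite E.
set G := fine (gap f Psi x gx).
have GE : gap f Psi x gx = G%:E by rewrite fineK.
have HG1 : inner gx (x - xstar) <= G by rewrite -lee_fin -GE.
have G1 : G <= 1 by apply: ltW; rewrite -lte_fin -GE.
have gx1 := grad_ineq x fcvx fprop fdiff Cxs.
have gx2 := grad_ineq xstar fcvx fprop fdiff Cx.
rewrite -/gs -/gx -(fineK (ffin _ Cxs)) -fxE -EFinD lee_fin in gx1.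
rewrite -/gs -/gx -(fineK (ffin _ Cxs)) -fxE -EFinD lee_fin in gx2.
have Ha : sigma * N (x - xstar) `^ p <= G.
  have H := Hgrow x Cx; rewrite -/gs in H.
  have E : inner gx (xstar - x) = - inner gx (x - xstar) by rewrite -innerNr opprB.
  rewrite E in gx2.
  exact: (lin3 H gx1 gx2 HG1).
have G0 : 0 <= G.
  apply: (le_trans _ Ha); apply: mulr_ge0; [exact: ltW | exact: powR_ge0].

case: (pselect (C s)) => Cs; last first.
  have [->|thp] := eqVneq th 0.
    rewrite /Dcal scale0r addr0 PsiC // /bregman subrr inner0r.
    rewrite -fxE -!EFinB subrr mul0e sube0 lee_fin powR0; last first.
      by rewrite gt_eqF // addr_gt0.
    by rewrite !(mulr0, mul0r, subr0, addr0).
  have thp' : (0 < th%:E)%E by rewrite lte_fin lt_neqAle eq_sym thp th0.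
  by rewrite /Dcal (PsiNC s Cs) gt0_muley //= addeNy leNye.
have [h0 hE hZ hD] := HN.
set xth := x + th *: (s - x).
have Cxth : C xth by apply: cvx => //; rewrite th0 th1.
have fthE := fineK (ffin _ Cxth).
rewrite /Dcal !PsiC // /bregman -fxE -fthE -/gx.
rewrite !mule0 !sube0 adde0 -!EFinB lee_fin -/xth -/fx.
set gth := grad f xth.
have gi := grad_ineq x fcvx fprop fdiff Cxth.
rewrite -/gth -fxE -fthE -EFinD lee_fin in gi.
have dxe : xth - x = th *: (s - x) by rewrite /xth addrAC subrr add0r.
have d0 : 0 <= N (s - x) by [].
have Nxth : N (xth - x) = th * N (s - x) by rewrite dxe hZ ger0_norm.
have E1 : inner gth (x - xth) = - inner gth (xth - x) by rewrite -innerNr opprB.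
rewrite E1 -/fx in gi.
have D1 := lin4 (inner gx (xth - x)) gi.
rewrite -innerBl in D1.
have hol : inner (gth - gx) (xth - x) <= L * N (xth - x) `^ nu * N (xth - x).
  apply: le_trans (dual_le HN _ _) _.
  apply: ler_wpM2r; [exact: h0 | exact: (Hhol _ _ Cxth Cx)].
rewrite -mulrA pow1D // Nxth in hol.
have neg : inner gx (s - xstar) <= 0.
  case: sub => cfin cH.
  have := cH 0; rewrite sub0r opprK => H.
  have c0 : (conj Psi 0 <= 0)%E.
    apply: ge_ereal_sup => _ [y _ <-].
    rewrite (innerC 0 y) inner0r.
    case: (pselect (C y)) => Cy; first by rewrite PsiC // sube0.
    by rewrite PsiNC // leNye.
  have := le_trans (leeD h2 (lexx _)) (le_trans H c0).
  by rewrite -EFinD lee_fin addrC (innerC s) innerBr.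
have Hb : sigma * N (s - xstar) `^ p <= L * N (x - xstar) `^ nu * N (s - xstar).
  have H := Hgrow s Cs; rewrite -/gs in H.
  have E2 : inner gs (s - xstar) = inner gx (s - xstar) + inner (gs - gx) (s - xstar).
    by rewrite innerBl; apply: addrsub.
  have H3 : inner (gs - gx) (s - xstar) <= L * N (x - xstar) `^ nu * N (s - xstar).
    apply: le_trans (dual_le HN _ _) _.
    apply: ler_wpM2r; first exact: h0.
    by have := Hhol _ _ Cxs Cx; rewrite -(NN HN (xstar - x)) opprB.
  rewrite E2 in H.
  exact: le_trans H (lin2 neg H3).
have Hk := key s0 L0 nu0 nu1 p2 (h0 (x - xstar)) (h0 (s - xstar)) G0 G1 Ha Hb.
rewrite -/e -/K in Hk.
have dab : N (s - x) <= N (x - xstar) + N (s - xstar).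
  have t := hD (s - xstar) (xstar - x).
  rewrite -(NN HN (xstar - x)) opprB in t.
  have E3 : s - x = (s - xstar) + (xstar - x) by rewrite addrA subrK.
  by rewrite E3 [leRHS]addrC.
have dK : N (s - x) <= K * G `^ e := le_trans dab Hk.
have q0 : 0 <= 1 + nu by apply: addr_ge0 => //; exact: ltW.
have dq : N (s - x) `^ (1 + nu) <= K `^ (1 + nu) * G `^ (e * (1 + nu)).
  rewrite powRrM -powRM; [| exact: ltW K0 | exact: powR_ge0].
  exact: mono_pow.
apply: (le_trans D1); apply: (le_trans hol).
rewrite powRM //.
have qn0 : 1 + nu != 0 by rewrite gt_eqF // addr_gt0.
have -> : L * K `^ (1 + nu) * (1 + nu) * th `^ (1 + nu) / (1 + nu) * G `^ (e * (1 + nu))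
  = L * (th `^ (1 + nu) * (K `^ (1 + nu) * G `^ (e * (1 + nu)))).
  by field.
apply: ler_wpM2l; first exact: ltW.
apply: ler_wpM2l; first exact: powR_ge0.
exact: dq.
Qed.
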